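(* Let $\Gamma=\langle V,(w_u)_{u\in V},\alpha,\beta\rangle$ be a celebrity game with $\beta>1$, $n=|V|$ and $W=\sum_{u\in V}w_u$. Then $\mathrm{opt}(\Gamma)=\min\{\alpha,W\}\,(n-1)$.
   Context: A celebrity game $\Gamma=\langle V,(w_u)_{u\in V},\alpha,\beta\rangle$ consists of a set of players $V=\{1,\dots,n\}$, celebrity weights $w_u>0$, a link cost $\alpha>0$ and a critical distance $\beta$ with $1\le\beta\le n-1$. A strategy of player $u$ is a set $S_u\subseteq V\setminus\{u\}$; a strategy profile is $S=(S_1,\dots,S_n)$; its outcome graph $G[S]$ is the undirected graph on $V$ with edge set $\{\{u,v\}: u\in S_v\text{ or }v\in S_u\}$. With $d_G$ the graph distance (infinite between different connected components), the cost of player $u$ is $c_u(S)=\alpha|S_u|+\sum_{v:\,d_{G[S]}(u,v)>\beta}w_v$, the social cost is $C(S)=\sum_{u\in V}c_u(S)$, and $\mathrm{opt}(\Gamma)=\min_S C(S)$ over all strategy profiles. *)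

(* Defs.v *)
From mathcomp Require Import all_boot all_order all_algebra.
Set Implicit Arguments. Unset Strict Implicit. Unset Printing Implicit Defensive.
Import Order.TTheory GRing.Theory Num.Theory.
Local Open Scope ring_scope.

Definition valid_profile (n : nat) (S : 'I_n -> {set 'I_n}) : Prop :=
  forall u : 'I_n, u \notin S u.

Definition adj (n : nat) (S : 'I_n -> {set 'I_n}) (u v : 'I_n) : bool :=
  (u \in S v) || (v \in S u).

Fixpoint ball (n : nat) (S : 'I_n -> {set 'I_n}) (k : nat) (u : 'I_n)
  : {set 'I_n} :=
  match k with
  | 0 => [set u]
  | k'.+1 => ball S k' u :|: [set v | [exists x in ball S k' u, adj S x v]]
  end.

(* d_{G[S]}(u,v) > beta  iff  v is not in the beta-ball of u. *)
Definition far (n : nat) (S : 'I_n -> {set 'I_n}) (beta : nat) (u v : 'I_n)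
  : bool := v \notin ball S beta u.

Definition player_cost (R : realFieldType) (n : nat) (w : 'I_n -> R)
  (alpha : R) (beta : nat) (S : 'I_n -> {set 'I_n}) (u : 'I_n) : R :=
  alpha * (#|S u|)%:R + \sum_(v | far S beta u v) w v.

Definition social_cost (R : realFieldType) (n : nat) (w : 'I_n -> R)
  (alpha : R) (beta : nat) (S : 'I_n -> {set 'I_n}) : R :=
  \sum_(u : 'I_n) player_cost w alpha beta S u.

Definition is_opt (R : realFieldType) (n : nat) (w : 'I_n -> R)
  (alpha : R) (beta : nat) (x : R) : Prop :=
  (exists S, valid_profile S /\ social_cost w alpha beta S = x) /\
  (forall S, valid_profile S -> x <= social_cost w alpha beta S).

(* Main.v *)
Require Import Defs.
From mathcomp Require Import all_boot all_order all_algebra zify.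
Import Order.TTheory GRing.Theory Num.Theory.
Set Implicit Arguments. Unset Strict Implicit. Unset Printing Implicit Defensive.


Lemma adj_sym n (S : 'I_n -> {set 'I_n}) : symmetric (adj S).
Proof. by move=> x y; rewrite /adj orbC. Qed.

Lemma csym n (S : 'I_n -> {set 'I_n}) : connect_sym (adj S).
Proof. exact/sym_connect_sym/adj_sym. Qed.

Lemma ball_conn n (S : 'I_n -> {set 'I_n}) k u v :
  v \in ball S k u -> connect (adj S) u v.
Proof.
elim: k v => [|k IH] v /=; first by rewrite inE => /eqP ->.
rewrite inE => /orP[/IH //|]; rewrite inE => /existsP[x /andP[/IH hx hxv]].
exact: connect_trans hx (connect1 hxv).
Qed.

Lemma ball_mono n (S : 'I_n -> {set 'I_n}) k m u :
  (k <= m)%N -> ball S k u \subset ball S m u.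
Proof.
move=> /subnK <-; elim: (m - k)%N => [|j IH] //=.
exact: subset_trans IH (subsetUl _ _).
Qed.

Lemma path_ball n (S : 'I_n -> {set 'I_n}) r p x k :
  path (adj S) x p -> x \in ball S k r -> last x p \in ball S (k + size p) r.
Proof.
elim: p x k => [|y p IH] x k /=; first by rewrite addn0.
move=> /andP[hxy hp] hx; rewrite -addSnnS; apply: IH => //=.
by rewrite inE; apply/orP; right; rewrite inE; apply/existsP; exists x; rewrite hx.
Qed.

Lemma conn_ball n (S : 'I_n -> {set 'I_n}) r u :
  connect (adj S) r u -> exists k, u \in ball S k r.
Proof.
move=> /connectP[p hp ->]; exists (0 + size p)%N; apply: path_ball => //.
by rewrite inE.
Qed.

Lemma root_ex n (S : 'I_n -> {set 'I_n}) u :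
  exists k, u \in ball S k (fingraph.root (adj S) u).
Proof. by apply: conn_ball; rewrite csym connect_root. Qed.

Definition dep n (S : 'I_n -> {set 'I_n}) u : nat := ex_minn (root_ex S u).

Lemma dep_in n (S : 'I_n -> {set 'I_n}) u : u \in ball S (dep S u) (fingraph.root (adj S) u).
Proof. by rewrite /dep; case: ex_minnP. Qed.

Lemma dep_min n (S : 'I_n -> {set 'I_n}) u k :
  u \in ball S k (fingraph.root (adj S) u) -> (dep S u <= k)%N.
Proof. by rewrite /dep; case: ex_minnP => m _ H /H. Qed.

Lemma parent n (S : 'I_n -> {set 'I_n}) u : ~~ roots (adj S) u ->
  exists x, adj S x u && (dep S x < dep S u)%N.
Proof.
move=> hu; have := dep_in S u; have := @dep_min _ S u.
case hd: (dep S u) => [|k] /= hmin.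
  by rewrite inE => /eqP h; move: hu; rewrite /roots -h eqxx.
rewrite inE => /orP[/hmin|]; first by rewrite ltnn.
rewrite inE => /existsP[x /andP[hx hxu]]; exists x; rewrite hxu /= ltnS.
apply: dep_min.
have : fingraph.root (adj S) x = fingraph.root (adj S) u.
  apply: (etrans _ (root_root (csym S) u)). apply/eqP; rewrite (root_connect (csym S)).
  rewrite csym; exact: ball_conn hx.
move=> ->; exact: hx.
Qed.

Lemma sum_card_pairs n (S : 'I_n -> {set 'I_n}) :
  (\sum_u #|S u|)%N = #|[set p : 'I_n * 'I_n | p.2 \in S p.1]|.
Proof.
have -> : (\sum_u #|S u| = \sum_u \sum_v (v \in S u : nat))%N.
  by apply: eq_bigr => u _; rewrite -sum1_card big_mkcond /=.
rewrite -sum1_card.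
rewrite pair_big /= [RHS]big_mkcond /=; apply: eq_bigr => p _; by rewrite inE; case: ifP.
Qed.

Definition gpair n (S : 'I_n -> {set 'I_n}) u : 'I_n * 'I_n :=
  match [pick x | adj S x u && (dep S x < dep S u)%N] with
  | Some x => if x \in S u then (u, x) else (x, u)
  | None => (u, u)
  end.

Lemma nonroots_le n (S : 'I_n -> {set 'I_n}) :
  (#|[set u | ~~ roots (adj S) u]| <= \sum_u #|S u|)%N.
Proof.
rewrite sum_card_pairs.
pose h (p : 'I_n * 'I_n) := if (dep S p.2 < dep S p.1)%N then p.1 else p.2.
have gok : forall u, u \in [set u | ~~ roots (adj S) u] ->
   h (gpair S u) = u /\ gpair S u \in [set p : 'I_n * 'I_n | p.2 \in S p.1].
  move=> u; rewrite inE => hu; rewrite /gpair; case: pickP; last first.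
    by case: (parent hu) => x hx /(_ x); rewrite hx.
  move=> x /andP[hxu hlt]; case: ifP => hx; rewrite /h /= ?hlt ?inE //=.
    rewrite ltnNge (ltnW hlt) /=; split=> //; move: hxu; by rewrite /adj hx.
rewrite -(card_in_imset (f := gpair S)); last first.
  by move=> u v /gok[hu _] /gok[hv _] e; rewrite -hu -hv e.
apply: subset_leq_card; apply/subsetP => p /imsetP[u /gok[_ hu] ->]; exact: hu.
Qed.
Local Open Scope ring_scope.

Lemma sum_sub (R : numDomainType) (T : finType) (P Q : pred T) (F : T -> R) :
  (forall i, P i -> Q i) -> (forall i, 0 <= F i) ->
  \sum_(i | P i) F i <= \sum_(i | Q i) F i.
Proof.
move=> PQ F0; rewrite [X in X <= _]big_mkcond [X in _ <= X]big_mkcond.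
apply: ler_sum => i _; case: ifP => [/PQ -> //|_]; by case: ifP.
Qed.

Lemma far_sum (R : realFieldType) n (w : 'I_n -> R) (S : 'I_n -> {set 'I_n})
  beta (hw : forall u, 0 < w u) :
  (\sum_u w u) *+ #|[set u | roots (adj S) u]| - \sum_u w u <=
  \sum_u \sum_(v | far S beta u v) w v.
Proof.
set Rt := [set u | roots (adj S) u]; set W := \sum_u w u.
have w0 : forall u, 0 <= w u by move=> u; exact: ltW.
apply: (@le_trans _ _ (\sum_u \sum_(v | ~~ connect (adj S) u v) w v)); last first.
  apply: ler_sum => u _; apply: sum_sub => // v; apply: contra.
  exact: ball_conn.
apply: (@le_trans _ _ (\sum_(u in Rt) \sum_(v | ~~ connect (adj S) u v) w v)); last first.
  by apply: sum_sub => // u; apply: sumr_ge0.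
have e1 : forall u, \sum_(v | ~~ connect (adj S) u v) w v =
                   W - \sum_(v | connect (adj S) u v) w v.
  move=> u; rewrite /W [\sum_(u0 < n) w u0](bigID (connect (adj S) u)) /=.
  by rewrite addrAC subrr add0r.
under eq_bigr do rewrite e1.
rewrite sumrB sumr_const; apply: lerB => //.
rewrite le_eqVlt; apply/orP; left; apply/eqP.
rewrite /W [RHS](partition_big (fingraph.root (adj S)) (fun r => r \in Rt)) /=; last first.
  by move=> u _; rewrite inE roots_root //; exact: csym.
apply: eq_bigr => r; rewrite inE => /eqP hr; apply: eq_bigl => v.
by rewrite -{2}hr (root_connect (csym S)) csym.
Qed.

Lemma lower (R : realFieldType) n (w : 'I_n -> R) alpha beta (S : 'I_n -> {set 'I_n})
  (hw : forall u, 0 < w u) (halpha : 0 < alpha) (u0 : 'I_n) :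
  Num.min alpha (\sum_u w u) * (n - 1)%:R <= social_cost w alpha beta S.
Proof.
set W := \sum_u w u; set m := Num.min alpha W.
set Rt := [set u | roots (adj S) u].
have hk : (0 < #|Rt|)%N.
  apply/card_gt0P; exists (fingraph.root (adj S) u0).
  by rewrite inE roots_root //; exact: csym.
have hc : (#|[set u | ~~ roots (adj S) u]| + #|Rt| = n)%N.
  have -> : [set u | ~~ roots (adj S) u] = ~: Rt.
    by apply/setP => u; rewrite !inE.
  by rewrite addnC cardsC card_ord.
have he := nonroots_le S.
have hf := @far_sum R n w S beta hw.
rewrite /social_cost /player_cost big_split /= -mulr_sumr -natr_sum.
move: he hf; rewrite -/Rt; set E := (\sum_u #|S u|)%N; set F := \sum_u _.
move: hc hk; set a := #|[set u | ~~ roots (adj S) u]|; set k := #|Rt|.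
case: k => // j hc _ he hf.
have hn : (n - 1 = a + j)%N by rewrite -hc; lia.
have hma : m <= alpha by rewrite /m ge_min lexx.
have hmW : m <= W by rewrite /m ge_min lexx orbT.
have m0 : 0 <= m by rewrite /m le_min ltW //=; apply: sumr_ge0 => i _; apply: ltW.
rewrite -/W mulrSr addrK in hf.
rewrite hn natrD mulrDr; apply: lerD.
  apply: (le_trans (ler_wpM2r (ler0n _ _) hma)).
  by apply: ler_wpM2l; [exact: ltW | rewrite ler_nat].
apply: le_trans hf; rewrite -[W *+ j]mulr_natr; apply: ler_wpM2r; [exact: ler0n | exact: hmW].
Qed.

Lemma empty_cost (R : realFieldType) n (w : 'I_n -> R) alpha beta (u0 : 'I_n) :
  social_cost w alpha beta (fun _ => set0) = (\sum_u w u) * (n - 1)%:R.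
Proof.
have hb : forall k u, ball (fun _ : 'I_n => set0) k u = [set u].
  elim=> [|k IH] u //=; rewrite IH; apply/setP => v; rewrite !inE.
  case: eqP => //= _; apply/negbTE/existsP => -[x]; by rewrite /adj !inE andbF.
rewrite /social_cost /player_cost.
under eq_bigr => u _ do rewrite cards0 mulr0 add0r.
have e : forall u, \sum_(v | far (fun _ => set0) beta u v) w v = \sum_v w v - w u.
  move=> u; rewrite [X in _ = X - _](bigD1 u) //= addrC addrK; apply: eq_bigl => v.
  by rewrite /far hb inE.
under eq_bigr => u _ do rewrite e.
rewrite sumrB sumr_const card_ord.
have hn : n = (n - 1).+1 by have := ltn_ord u0; lia.
by rewrite [X in _ *+ X - _]hn mulrSr addrK mulr_natr.
Qed.

Definition star n (c : 'I_n) (u : 'I_n) : {set 'I_n} :=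
  if u == c then set0 else [set c].

Lemma star_ball n (c : 'I_n) u v : v \in ball (star c) 2 u.
Proof.
have adjc : forall x, x != c -> adj (star c) x c.
  by move=> x hx; rewrite /adj /star (negbTE hx) !inE eqxx orbT.
have step : forall k x y, x \in ball (star c) k u -> adj (star c) x y ->
   y \in ball (star c) k.+1 u.
  move=> k x y hx hxy /=; rewrite inE; apply/orP; right; rewrite inE.
  by apply/existsP; exists x; rewrite hx.
have cin : c \in ball (star c) 1 u.
  case: (eqVneq u c) => [->|huc]; first by rewrite /= !inE eqxx.
  by apply: (step 0%N u); rewrite ?inE ?adjc.
case: (eqVneq v c) => [->|hvc].
  by rewrite /=; rewrite inE cin.
apply: (step 1%N c) => //; rewrite adj_sym; exact: adjc.
Qed.

Lemma star_cost (R : realFieldType) n (w : 'I_n -> R) alpha beta (c : 'I_n) :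
  (2 <= beta)%N -> social_cost w alpha beta (star c) = alpha * (n - 1)%:R.
Proof.
move=> hb; rewrite /social_cost /player_cost.
have f0 : forall u, \sum_(v | far (star c) beta u v) w v = 0.
  move=> u; rewrite big_pred0 // => v; rewrite /far.
  by rewrite (subsetP (@ball_mono _ (star c) 2 beta u hb)) ?star_ball.
under eq_bigr => u _ do rewrite f0 addr0.
rewrite -mulr_sumr (bigD1 c) //= /star eqxx cards0 add0r.
rewrite (eq_bigr (fun _ => 1)); last by move=> u /negbTE ->; rewrite cards1.
by rewrite sumr_const cardC1 card_ord subn1.
Qed.

Unset Implicit Arguments.
Theorem proposition2 (R : realFieldType) (n : nat) (w : 'I_n -> R)
  (alpha : R) (beta : nat)
  (hw : forall u, 0 < w u) (halpha : 0 < alpha)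
  (hbeta1 : (1 < beta)%N) (hbetan : (beta <= n - 1)%N) :
  is_opt w alpha beta (Num.min alpha (\sum_(u : 'I_n) w u) * (n - 1)%:R).
Proof.
have n0 : (0 < n)%N by lia.
pose u0 : 'I_n := Ordinal n0.
split; last by move=> S _; exact: lower.
case: (leP alpha (\sum_u w u)) => h.
  exists (star u0); split; last by rewrite star_cost.
  by move=> u; rewrite /star; case: eqP => [_|/eqP hu]; rewrite ?inE // eq_sym.
exists (fun _ => set0); split; first by move=> u; rewrite inE.
exact: empty_cost.
Qed.
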